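(* Let $\mathcal{F}$ be a vector space over a field $K$, let $T \colon \mathcal{F} \to \mathcal{F}$ be a surjective linear map, let $\mathcal{B} \leq \mathcal{F}^*$ be a finite-dimensional subspace of the dual space, and let $\mathcal{E} \leq \mathcal{F}$ be a subspace. Let $G \colon \mathcal{F} \to \mathcal{F}$ be any linear right inverse of $T$ (i.e. $TG = 1$). Then $$T(\mathcal{B}^{\perp})^{\perp} = G^*\bigl(\mathcal{B} \cap (\operatorname{Ker} T)^{\perp}\bigr).$$ Moreover, $\dim T(\mathcal{B}^{\perp})^{\perp} = \dim \mathcal{E}'$ for every subspace $\mathcal{E}' \leq \mathcal{F}$ with $\mathcal{F} = T(\mathcal{B}^{\perp}) \dotplus \mathcal{E}'$ (direct sum).
   Context: $\mathcal{F}^*$ denotes the algebraic dual of $\mathcal{F}$. For $U \leq \mathcal{F}$, $U^{\perp} = \{\beta \in \mathcal{F}^* : \beta(u) = 0 \text{ for all } u \in U\}$; for $\mathcal{B} \leq \mathcal{F}^*$, $\mathcal{B}^{\perp} = \{v \in \mathcal{F} : \beta(v) = 0 \text{ for all } \beta \in \mathcal{B}\}$. For a linear map $S\colon \mathcal{F} \to \mathcal{F}$, the transpose $S^* \colon \mathcal{F}^* \to \mathcal{F}^*$ is $\gamma \mapsto \gamma \circ S$. The triple $(T, \mathcal{B}, \mathcal{E})$ is called a generalized boundary problem. *)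

(* Defs.v *)
From HB Require Import structures.
From mathcomp Require Import all_boot all_order all_algebra.
From mathcomp Require Import functions.
Set Implicit Arguments. Unset Strict Implicit. Unset Printing Implicit Defensive.
Import GRing.Theory.
Local Open Scope ring_scope.

Definition is_subspace (K : fieldType) (V : lmodType K) (S : V -> Prop) : Prop :=
  S 0 /\ forall (a : K) (x y : V), S x -> S y -> S (a *: x + y).

Definition has_dim (K : fieldType) (V : lmodType K) (S : V -> Prop) (n : nat) : Prop :=
  exists b : 'I_n -> V,
    (forall i, S (b i)) /\
    (forall c : 'I_n -> K, \sum_(i < n) c i *: b i = 0 -> forall i, c i = 0) /\
    (forall v, S v -> exists c : 'I_n -> K, v = \sum_(i < n) c i *: b i).

Definition finite_dim (K : fieldType) (V : lmodType K) (S : V -> Prop) : Prop :=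
  exists n, has_dim S n.

(* The algebraic dual F^*: linear functionals F -> K, viewed inside the
   K-vector space of all functions F -> K (pointwise operations). *)

Definition is_functional (K : fieldType) (F : lmodType K) (f : (F -> K^o)) : Prop :=
  forall (a : K) (x y : F), f (a *: x + y) = a * f x + f y.

Definition perp (K : fieldType) (F : lmodType K) (U : F -> Prop) : (F -> K^o) -> Prop :=
  fun beta => is_functional beta /\ forall u, U u -> beta u = 0.

Definition perpD (K : fieldType) (F : lmodType K) (B : (F -> K^o) -> Prop) : F -> Prop :=
  fun v => forall beta, B beta -> beta v = 0.

Definition transpose (K : fieldType) (F : lmodType K) (S : F -> F) (g : (F -> K^o)) : (F -> K^o) :=
  fun x => g (S x).

Definition img (A B : Type) (f : A -> B) (S : A -> Prop) : B -> Prop :=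
  fun y => exists x, S x /\ f x = y.

Definition kernel (K : fieldType) (F : lmodType K) (S : F -> F) : F -> Prop :=
  fun x => S x = 0.

Definition meet (A : Type) (S1 S2 : A -> Prop) : A -> Prop := fun x => S1 x /\ S2 x.

Definition direct_sum_whole (K : fieldType) (F : lmodType K) (U E' : F -> Prop) : Prop :=
  (forall x : F, exists u e, U u /\ E' e /\ x = u + e) /\
  (forall x : F, U x -> E' x -> x = 0).

(* Main.v *)
Require Import Defs.
From HB Require Import structures.
From mathcomp Require Import all_boot all_order all_algebra.
From mathcomp Require Import boolp functions ring.
Import GRing.Theory.
Set Implicit Arguments. Unset Strict Implicit.
Local Open Scope ring_scope.

Section Aux.
Variable K : fieldType.

Section Sub.
Variables (V : lmodType K) (S : V -> Prop) (HS : is_subspace S).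
Lemma sS0 : S 0. Proof. by case: HS. Qed.
Lemma sSD x y : S x -> S y -> S (x + y).
Proof. by move=> ??; rewrite -[x]scale1r; apply HS. Qed.
Lemma sSZ a x : S x -> S (a *: x).
Proof. by move=> ?; rewrite -[_ *: _]addr0; apply HS => //; apply: sS0. Qed.
Lemma sSB x y : S x -> S y -> S (x - y).
Proof. by move=> ??; rewrite addrC -scaleN1r; apply HS. Qed.
Lemma sSsum n (c : 'I_n -> K) (v : 'I_n -> V) :
  (forall i, S (v i)) -> S (\sum_(i < n) c i *: v i).
Proof.
move=> Hv; elim/big_rec: _ => [|i y _ Hy]; first exact: sS0.
by apply HS.
Qed.
End Sub.

Section Fun.
Variables (F : lmodType K) (f : F -> K^o) (Hf : is_functional f).
Lemma fD x y : f (x + y) = f x + f y.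
Proof. by rewrite -[x]scale1r Hf scale1r mul1r. Qed.
Lemma f0 : f 0 = 0.
Proof. have h := fD 0 0; rewrite addr0 in h. by apply: (addrI (f 0)); rewrite addr0 -h. Qed.
Lemma fZ a x : f (a *: x) = a * f x.
Proof. by rewrite -[_ *: _]addr0 Hf f0 addr0. Qed.
Lemma fB x y : f (x - y) = f x - f y.
Proof. by rewrite fD -scaleN1r fZ mulN1r. Qed.
Lemma fsum n (c : 'I_n -> K) (v : 'I_n -> F) :
  f (\sum_(i < n) c i *: v i) = \sum_(i < n) c i * f (v i).
Proof.
elim/big_rec2: _ => [|i y1 y2 _ <-]; first exact: f0.
by rewrite Hf.
Qed.
End Fun.

Lemma sum_eval (F : lmodType K) n (c : 'I_n -> K) (f : 'I_n -> F -> K^o) x :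
  (\sum_(i < n) c i *: f i) x = \sum_(i < n) c i * f i x.
Proof. by rewrite fct_sumE. Qed.

Lemma ordS_case k (i : 'I_k.+1) :
  i = ord_max \/ exists j : 'I_k, i = widen_ord (leqnSn k) j.
Proof.
case: i => i Hi; have := Hi; rewrite ltnS leq_eqVlt => /orP[/eqP E|H].
  by left; apply: val_inj; rewrite /= E.
by right; exists (Ordinal H); apply: val_inj.
Qed.

Definition ext {A : Type} {k} (f : 'I_k -> A) (a : A) (i : 'I_k.+1) : A :=
  if insub (val i) is Some j then f j else a.
Lemma ext_w A k (f : 'I_k -> A) a j : ext f a (widen_ord (leqnSn k) j) = f j.
Proof. by rewrite /ext /= valK. Qed.
Lemma ext_m A k (f : 'I_k -> A) a : ext f a ord_max = a.
Proof. by rewrite /ext insubF //= ltnn. Qed.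
End Aux.


Section S2.
Variables (K : fieldType) (F : lmodType K).

Lemma nz_ex (g : F -> K^o) : ~ (exists x, g x != 0) -> forall x, g x = 0.
Proof. by move=> Hno x; apply/eqP; apply/negPn/negP => h; apply: Hno; exists x. Qed.

Lemma span_lem n : forall (b : 'I_n -> F -> K^o) (beta : F -> K^o),
  (forall i, is_functional (b i)) -> is_functional beta ->
  (forall x, (forall i, b i x = 0) -> beta x = 0) ->
  exists c : 'I_n -> K, forall x, beta x = \sum_(i < n) c i * b i x.
Proof.
elim: n => [|n IH] b beta Hb Hbeta H.
  by exists (fun _ => 0) => x; rewrite big_ord0; apply: H => -[].
pose bl := b ord_max; pose b' j := b (widen_ord (leqnSn n) j).
have [[x0 Hx0]|Hno] := EM (exists x0, bl x0 != 0); last first.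
  have Hz := nz_ex Hno.
  have Hh : forall x, (forall j, b' j x = 0) -> beta x = 0.
    move=> x Hx; apply: (H x) => i; case: (ordS_case i) => [E|[j E]]; rewrite E; first exact: Hz.
    exact: Hx.
  have [c Hc] := IH b' beta (fun j => Hb _) Hbeta Hh.
  exists (ext c 0) => x; rewrite big_ord_recr /= ext_m mul0r addr0 Hc.
  by apply: eq_bigr => j _; rewrite ext_w.
pose x1 := (bl x0)^-1 *: x0.
have Hbl : is_functional bl := Hb ord_max.
have Hx1 : bl x1 = 1 by rewrite /x1 (fZ Hbl); exact: mulVf.
pose P x := x - bl x *: x1.
have Plin a x y : P (a *: x + y) = a *: P x + P y.
  rewrite /P Hbl scalerDl -scalerA scalerBr opprD addrACA.
  by [].
have PF g : is_functional g -> is_functional (fun x => g (P x)).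
  by move=> Hg a x y /=; rewrite Plin Hg.
have Hh : forall x, (forall j, b' j (P x) = 0) -> beta (P x) = 0.
  move=> x Hx; apply: (H (P x)) => i; case: (ordS_case i) => [E|[j E]]; rewrite E; last exact: Hx.
  by rewrite -/bl /P (fB Hbl) (fZ Hbl) Hx1 mulr1 subrr.
have [c Hc] := IH (fun j x => b' j (P x)) (fun x => beta (P x))
   (fun j => PF _ (Hb _)) (PF _ Hbeta) Hh.
exists (ext c (beta x1 - \sum_(j < n) c j * b' j x1)) => x.
have -> : beta x = beta (P x) + bl x * beta x1.
  by rewrite -fZ // -fD // /P subrK.
rewrite Hc big_ord_recr /= ext_m.
under eq_bigr => j _ do rewrite /b' /P (fB (Hb _)) (fZ (Hb _)) mulrBr mulrCA.
under [in RHS]eq_bigr => j _ do rewrite ext_w.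
rewrite sumrB -mulr_sumr /b' /bl; ring.
Qed.
End S2.


Section S3.
Variables (K : fieldType) (F : lmodType K).

Lemma fin_lem m : forall (phi : 'I_m -> F -> K^o) (S : F -> Prop),
  is_subspace S -> (forall i, is_functional (phi i)) ->
  (forall e, S e -> (forall i, phi i e = 0) -> e = 0) -> exists n, has_dim S n.
Proof.
elim: m => [|m IH] phi S HS Hphi H.
  exists 0%N, (fun _ => 0); split; first by case.
  split; first by move=> c _ [].
  move=> v Sv; exists (fun _ => 0); rewrite big_ord0; apply: H => // -[i Hi] //.
pose pl := phi ord_max; pose phi' j := phi (widen_ord (leqnSn m) j).
have Hpl : is_functional pl := Hphi ord_max.
pose S' e := S e /\ pl e = 0.
have HS' : is_subspace S'.
  split; first by split; [exact: sS0 | exact: f0].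
  move=> a x y [Sx px] [Sy py]; split; first by apply HS.
  by rewrite Hpl px py mulr0 addr0.
have Hh : forall e, S' e -> (forall j, phi' j e = 0) -> e = 0.
  move=> e [Se pe] He; apply: H => // i.
  by case: (ordS_case i) => [E|[j E]]; rewrite E; [exact: pe | exact: He].
have [n [b [Hbm [Hind Hspan]]]] := IH phi' S' HS' (fun j => Hphi _) Hh.
have [[e0 [Se0 pe0]]|Hno] := EM (exists e0, S e0 /\ pl e0 != 0); last first.
  exists n, b; split; first by move=> i; case: (Hbm i).
  split => // v Sv; apply: Hspan; split => //.
  by apply/eqP; apply/negPn/negP => h; apply: Hno; exists v.
pose e1 := (pl e0)^-1 *: e0.
have Se1 : S e1 by apply: sSZ.
have pe1 : pl e1 = 1 by rewrite /e1 (fZ Hpl); exact: mulVf.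
exists n.+1, (ext b e1); split.
  by move=> i; case: (ordS_case i) => [E|[j E]]; rewrite E ?ext_m ?ext_w //; case: (Hbm j).
split.
  move=> c; rewrite big_ord_recr /= ext_m.
  under eq_bigr => j _ do rewrite ext_w.
  move=> Hc.
  have cm : c ord_max = 0.
    have := congr1 pl Hc; rewrite (fD Hpl) (fZ Hpl) (fsum Hpl) pe1 mulr1 f0 //.
    rewrite big1 ?add0r // => j _; case: (Hbm j) => _ ->; exact: mulr0.
  rewrite cm scale0r addr0 in Hc.
  have := Hind _ Hc => Hw i.
  by case: (ordS_case i) => [E|[j E]]; rewrite E.
move=> v Sv.
have Sv' : S' (v - pl v *: e1).
  split; first by apply: sSB => //; apply: sSZ.
  by rewrite (fB Hpl) (fZ Hpl) pe1 mulr1 subrr.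
have [c Hc] := Hspan _ Sv'.
exists (ext c (pl v)); rewrite big_ord_recr /= ext_m.
under eq_bigr => j _ do rewrite !ext_w.
by rewrite ext_m -Hc subrK.
Qed.
End S3.


Section S4.
Variables (K : fieldType) (F : lmodType K).

Lemma dual_lem (U E' : F -> Prop) n : is_subspace U -> is_subspace E' ->
  direct_sum_whole U E' -> has_dim E' n -> has_dim (perp U) n.
Proof.
move=> HU HE [Hdec Hint] [e [He [Hind Hspan]]].
have ex x : exists c : 'I_n -> K, U (x - \sum_(j < n) c j *: e j).
  have [u [e' [Uu [Ee' ->]]]] := Hdec x.
  have [c ->] := Hspan _ Ee'; exists c; by rewrite addrK.
have uniq x c d : U (x - \sum_(j < n) c j *: e j) -> U (x - \sum_(j < n) d j *: e j) ->
    forall j, c j = d j.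
  move=> Hc Hd j.
  have Hw : \sum_(j < n) (d j - c j) *: e j = 0.
    apply: Hint.
      have := sSB HU Hc Hd; congr U.
      under [in RHS]eq_bigr => i _ do rewrite scalerBl.
      by rewrite sumrB opprB addrC addrA subrK.
    under eq_bigr => i _ do rewrite scalerBl.
    by rewrite sumrB; apply: (sSB HE); apply: sSsum.
  by have := Hind _ Hw j => /eqP; rewrite subr_eq0 => /eqP.
case: (choice ex) => cf Hcf.
have cfe k j : cf (e k) j = (j == k)%:R.
  move: j; apply: (uniq (e k) (cf (e k)) (fun j => (j == k)%:R) (Hcf (e k))).
  rewrite (bigD1 k) //= eqxx scale1r big1 ?addr0 ?subrr; first exact: sS0.
  by move=> i /negbTE ->; rewrite scale0r.
exists (fun j => (fun x => cf x j) : F -> K^o); split.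
  move=> j; split.
    move=> a x y /=.
    move: j; apply: (uniq _ _ (fun j => a * cf x j + cf y j) (Hcf (a *: x + y))).
    have := sSD HU (sSZ HU a (Hcf x)) (Hcf y); congr U.
    under [in RHS]eq_bigr => i _ do rewrite scalerDl -scalerA.
    by rewrite big_split /= -scaler_sumr scalerBr opprD addrACA.
  move=> u Uu; symmetry; move: j; apply: (uniq u (fun _ => 0) _ _ (Hcf u)).
  by rewrite big1 ?subr0 // => i _; rewrite scale0r.
split.
  move=> c Hc k.
  have := congr1 (fun g => g (e k)) Hc; rewrite sum_eval /=.
  under eq_bigr => j _ do rewrite cfe.
  rewrite (bigD1 k) //= eqxx mulr1 big1 ?addr0 // => j /negbTE ->.
  by rewrite mulr0.
move=> g [Hg Hgu]; exists (fun j => g (e j)); apply: funext => x.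
rewrite sum_eval /=.
have := Hgu _ (Hcf x); rewrite (fB Hg) (fsum Hg) => /eqP; rewrite subr_eq0 => /eqP ->.
by apply: eq_bigr => j _; rewrite mulrC.
Qed.
End S4.


Theorem proposition1 (K : fieldType) (F : lmodType K)
  (T : {linear F -> F}) (B : (F -> K^o) -> Prop) (E : F -> Prop)
  (G : {linear F -> F}) :
  (forall y : F, exists x, T x = y) ->
  (forall beta, B beta -> is_functional beta) ->
  is_subspace B -> finite_dim B ->
  is_subspace E ->
  (forall x : F, T (G x) = x) ->
  (forall f, perp (img (T : F -> F) (perpD B)) f <->
             img (transpose (G : F -> F)) (meet B (perp (kernel (T : F -> F)))) f) /\
  (forall E' : F -> Prop, is_subspace E' ->
     direct_sum_whole (img (T : F -> F) (perpD B)) E' ->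
     exists n, has_dim (perp (img (T : F -> F) (perpD B))) n /\ has_dim E' n).
Proof.
move=> Tsurj HBf HB [m [bB [HbB [HindB HspanB]]]] HE HTG.
have Hbf i : is_functional (bB i) := HBf _ (HbB i).
have perpDP x : (forall i, bB i x = 0) -> perpD B x.
  move=> Hx beta Bb; have [c ->] := HspanB _ Bb.
  by rewrite sum_eval big1 // => i _; rewrite Hx mulr0.
set U := img (T : F -> F) (perpD B).
have HU : is_subspace U.
  split.
    exists 0; split; last exact: linear0.
    by move=> beta Bb; apply: f0; apply: HBf.
  move=> a _ _ [x [Hx <-]] [y [Hy <-]]; exists (a *: x + y); split; last exact: linearP.
  by move=> beta Bb; rewrite (HBf _ Bb) Hx // Hy // mulr0 addr0.
split.
  move=> f; split.
    move=> [Hf Hfu].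
    have Hb : is_functional (fun x => f (T x) : K^o).
      by move=> a x y; rewrite linearP Hf.
    exists (fun x => f (T x)); split; last by apply: funext => x; rewrite /transpose HTG.
    split; last first.
      split => // u Hu; rewrite /kernel in Hu; rewrite Hu; exact: f0.
    have Hh : forall x, (forall i, bB i x = 0) -> f (T x) = 0.
      by move=> x Hx; apply: Hfu; exists x; split => //; apply: perpDP.
    have [c Hc] := span_lem Hbf Hb Hh.
    have -> : (fun x => f (T x) : K^o) = \sum_(i < m) c i *: bB i.
      by apply: funext => x; rewrite sum_eval Hc.
    by apply: sSsum => //.
  move=> [beta [[Bb [Hbk Hbku]] <-]]; split.
    by move=> a x y; rewrite /transpose linearP Hbk.
  move=> _ [v [Hv <-]]; rewrite /transpose.
  have -> : G (T v) = (G (T v) - v) + v by rewrite subrK.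
  rewrite (fD Hbk) Hbku ?add0r; first exact: Hv.
  by rewrite /kernel linearB /= HTG subrr.
move=> E' HE' [Hdec Hint].
have [n Hn] : exists n, has_dim E' n.
  apply: (@fin_lem K F m (fun i x => bB i (G x))) => //.
    by move=> i a x y; rewrite linearP Hbf.
  move=> e Ee He; apply: Hint => //.
  by exists (G e); split; [apply: perpDP | apply: HTG].
by exists n; split => //; apply: (dual_lem HU HE').
Qed.
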